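(* Let $\mathscr{R}$ be the class of rook graphs. Then the class of all (finite, simple, undirected) graphs is transducible from $\mathscr{R}$; that is, there is a transduction ${\mathsf T}$ such that every graph belongs to ${\mathsf T}(\mathscr{R})$.
   Context: A rook graph has vertex set $\{1,\ldots,a\}\times\{1,\ldots,b\}$ for some $a,b\in\mathbb{N}$, and two distinct vertices $(i,j),(i',j')$ are adjacent iff $i=i'$ or $j=j'$. Graphs are viewed as relational structures with universe the vertex set and one symmetric irreflexive binary relation $\mathsf{adj}$; a $C$-colored graph additionally has a unary predicate for each color in the finite set $C$ (colors are arbitrary vertex subsets, not necessarily disjoint). A transduction ${\mathsf T}$ consists of a finite set of colors $C$ and a first-order formula $\varphi(x,y)$ over the signature of $C$-colored graphs. For a graph $G$, ${\mathsf T}(G)$ is the set of all graphs obtained by: (1) adding the colors of $C$ to $G$ arbitrarily, yielding $G^+$; (2) forming the graph $\varphi(G^+)$ on vertex set $V(G)$ in which distinct $u,v$ are adjacent iff $G^+\models\varphi(u,v)$ or $G^+\models\varphi(v,u)$; (3) taking an arbitrary induced subgraph of $\varphi(G^+)$. For a class $\mathscr{C}$, ${\mathsf T}(\mathscr{C})=\bigcup_{G\in\mathscr{C}}{\mathsf T}(G)$, and a class $\mathscr{D}$ is transducible from $\mathscr{C}$ if $\mathscr{D}\subseteq{\mathsf T}(\mathscr{C})$ for some transduction ${\mathsf T}$. *)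

(* Defs.v *)
From mathcomp Require Import all_boot.
Set Implicit Arguments. Unset Strict Implicit. Unset Printing Implicit Defensive.

Inductive formula (k : nat) : Type :=
| FAdj : nat -> nat -> formula k
| FEq : nat -> nat -> formula k
| FCol : 'I_k -> nat -> formula k
| FNot : formula k -> formula k
| FAnd : formula k -> formula k -> formula k
| FOr : formula k -> formula k -> formula k
| FExists : nat -> formula k -> formula k
| FForall : nat -> formula k -> formula k.

Fixpoint fv (k : nat) (f : formula k) : seq nat :=
  match f with
  | FAdj i j => [:: i; j]
  | FEq i j => [:: i; j]
  | FCol _ i => [:: i]
  | FNot g => fv g
  | FAnd g h => fv g ++ fv h
  | FOr g h => fv g ++ fv h
  | FExists i g => filter (fun j => j != i) (fv g)
  | FForall i g => filter (fun j => j != i) (fv g)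
  end.

Definition binary_formula (k : nat) (f : formula k) : bool :=
  all (fun j => j < 2) (fv f).

Definition upd (V : Type) (env : nat -> V) (i : nat) (v : V) : nat -> V :=
  fun j => if j == i then v else env j.

Fixpoint sat (k : nat) (V : finType) (adj : rel V) (col : 'I_k -> V -> bool)
    (env : nat -> V) (f : formula k) : Prop :=
  match f with
  | FAdj i j => adj (env i) (env j)
  | FEq i j => env i = env j
  | FCol c i => col c (env i)
  | FNot g => ~ sat adj col env g
  | FAnd g h => sat adj col env g /\ sat adj col env h
  | FOr g h => sat adj col env g \/ sat adj col env h
  | FExists i g => exists v : V, sat adj col (upd env i v) g
  | FForall i g => forall v : V, sat adj col (upd env i v) g
  end.

(** G^+ |= phi(u, v) (x := variable 0, y := variable 1). *)
Definition sat2 (k : nat) (V : finType) (adj : rel V) (col : 'I_k -> V -> bool)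
    (f : formula k) (u v : V) : Prop :=
  sat adj col (upd (upd (fun _ => u) 0 u) 1 v) f.

Definition interp_adj (k : nat) (V : finType) (adj : rel V) (col : 'I_k -> V -> bool)
    (f : formula k) (u v : V) : Prop :=
  u <> v /\ (sat2 adj col f u v \/ sat2 adj col f v u).

(** Rook graph on {1..a} x {1..b}, modelled as 'I_a * 'I_b. *)
Definition rook_adj (a b : nat) : rel ('I_a * 'I_b) :=
  fun p q => (p != q) && ((p.1 == q.1) || (p.2 == q.2)).

(** A (finite simple) graph (T, e) belongs (up to isomorphism) to T(G) for the
    transduction (k colors, phi) and the graph G = (V, adj): there is a
    coloring of G and an induced subgraph of phi(G^+) isomorphic to (T, e),
    i.e. an injective map f : T -> V with e u v <-> phi(G^+)-adjacency of f u, f v. *)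
Definition in_transduction (k : nat) (f : formula k)
    (V : finType) (adj : rel V) (T : finType) (e : rel T) : Prop :=
  exists (col : 'I_k -> V -> bool) (g : T -> V),
    injective g /\
    forall u v : T, e u v <-> interp_adj adj col f (g u) (g v).

Definition in_transduction_rooks (k : nat) (f : formula k)
    (T : finType) (e : rel T) : Prop :=
  exists a b : nat, in_transduction f (@rook_adj a b) e.

(* Main.v *)
Require Import Defs.
From mathcomp Require Import all_boot.

Lemma rook_mid (n : nat) (x y : 'I_n) (z : 'I_n * 'I_n) : x <> y ->
  rook_adj (x, x) z -> rook_adj z (y, y) ->
  z = (x, y) \/ z = (y, x).
Proof.
move=> Hxy; case: z => k l; rewrite /rook_adj /=.
move=> /andP[H1 /orP[/eqP E1|/eqP E1]] /andP[H2 /orP[/eqP E2|/eqP E2]]; subst.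
- by [].
- by left.
- by right.
- by [].
Qed.

Definition phi0 : formula 1 :=
  @FExists 1 2 (@FAnd 1 (@FCol 1 ord0 2) (@FAnd 1 (@FAdj 1 0 2) (@FAdj 1 2 1))).

Theorem lemma2p6 :
  exists (k : nat) (phi : formula k),
    binary_formula phi /\
    forall (T : finType) (e : rel T),
      irreflexive e -> symmetric e -> in_transduction_rooks phi e.
Proof.
exists 1, phi0; split; first by [].
move=> T e irr sym.
exists #|T|, #|T|.
pose col := fun (_ : 'I_1) (p : 'I_#|T| * 'I_#|T|) => e (enum_val p.1) (enum_val p.2).
exists col, (fun t => (enum_rank t, enum_rank t)).
split.
  by move=> t1 t2 [] /enum_rank_inj.
have key1 : forall u v, u <> v -> sat2 (@rook_adj _ _) col phi0
      (enum_rank u, enum_rank u) (enum_rank v, enum_rank v) -> e u v.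
  move=> u v Huv; rewrite /sat2 /phi0 /= /upd /=.
  move=> [z [Hc [H1 H2]]].
  have Hr : enum_rank u <> enum_rank v by move/enum_rank_inj.
  case: (@rook_mid _ _ _ _ Hr H1 H2) => Ez; subst z; move: Hc; rewrite /col /= !enum_rankK //.
  by rewrite sym.
have key2 : forall u v, u <> v -> e u v -> sat2 (@rook_adj _ _) col phi0
      (enum_rank u, enum_rank u) (enum_rank v, enum_rank v).
  move=> u v Huv He; rewrite /sat2 /phi0 /= /upd /=.
  exists (enum_rank u, enum_rank v).
  have Hr : enum_rank u != enum_rank v.
    by apply/eqP => /enum_rank_inj.
  split; first by rewrite /col /= !enum_rankK.
  rewrite /rook_adj /= !eqxx /= orbT.
  rewrite !xpair_eqE !eqxx /= ?andbT ?(negbTE Hr) /=; try by []. 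
move=> u v; rewrite /interp_adj; split.
- move=> He; have Huv : u <> v by move=> E; subst; rewrite irr in He.
  split; first by case=> /enum_rank_inj.
  by left; apply: key2.
- move=> [Hne [H|H]].
  + by apply: key1 => // E; subst.
  + rewrite sym; apply: key1 => // E; subst; exact: Hne.
Qed.
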